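(* Let $f_\mathrm{s}=1/T_\mathrm{s}>0$, $b\in\mathbb{N}$, $\bar\kappa>0$, and let $S_{\mathsf{x}}(f)\ge 0$ be a power spectral density supported in $(-f_\mathrm{nyq}/2,f_\mathrm{nyq}/2)$. Consider the problem of maximizing, over nonnegative functions $\bar H:\mathbb{R}\to[0,\infty)$, the objective $$\int_{-f_\mathrm{s}/2}^{f_\mathrm{s}/2}\frac{\sum_{k\in\mathbb{Z}}\bar H(f-kf_\mathrm{s})\,S_{\mathsf{x}}(f-kf_\mathrm{s})}{\sum_{k'\in\mathbb{Z}}\bar H(f-k'f_\mathrm{s})+2^{-2b}}\,\mathrm{d}f$$ subject to $\bar\kappa\,T_\mathrm{s}\int_{-f_\mathrm{s}/2}^{f_\mathrm{s}/2}\sum_{k\in\mathbb{Z}}\bar H(f'-kf_\mathrm{s})\,\mathrm{d}f'=1$. Then the objective is maximized by choosing $\bar H$ such that, for each $\tilde f_0$ with $|\tilde f_0|<f_\mathrm{s}/2$, at most one of the values $\{\bar H(\tilde f_0+kf_\mathrm{s})\}_{k\in\mathbb{Z}}$ is non-zero, and this value corresponds to the $k\in\mathbb{Z}$ with the maximal value among $\{S_{\mathsf{x}}(\tilde f_0+kf_\mathrm{s})\}_{k\in\mathbb{Z}}$; that is, restricting to feasible $\bar H$ with this property does not decrease the achievable objective value.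
   Context: In the paper, $\bar H(f)=|H(f)|^2S_{\mathsf{x}}(f)$ for a pre-sampling filter $H$, and $\bar\kappa=\eta^2\left(1-\frac{2\eta^2}{3\cdot2^{2b}}\right)^{-1}$; the claim concerns only the stated optimization problem. *)

(* Defs.v *)
From HB Require Import structures.
From mathcomp Require Import all_boot all_order all_algebra.
From mathcomp Require Import all_classical all_reals all_analysis.
Set Implicit Arguments. Unset Strict Implicit. Unset Printing Implicit Defensive.
Import Order.TTheory GRing.Theory Num.Theory.
Local Open Scope classical_set_scope.
Local Open Scope ring_scope.

Section Defs.
Variable R : realType.

Definition alias_sum (fs : R) (g : R -> R) (f : R) : \bar R :=
  (\esum_(k in [set: int]) (g (f - k%:~R * fs))%:E)%E.

Definition objective (fs : R) (b : nat) (S Hb : R -> R) : \bar R :=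
  (\int[lebesgue_measure]_(f in `[(- (fs / 2))%R, (fs / 2)%R])
     (alias_sum fs (fun x => (Hb x * S x)%R) f *
      (alias_sum fs Hb f + (2 ^- (2 * b))%R%:E)^-1))%E.

Definition feasible (fs kappa : R) (Hb : R -> R) : Prop :=
  measurable_fun setT Hb /\ (forall f, 0 <= Hb f) /\
  ((kappa * fs^-1)%R%:E *
     \int[lebesgue_measure]_(f in `[(- (fs / 2))%R, (fs / 2)%R]) alias_sum fs Hb f = 1)%E.

Definition alias_free_argmax (fs : R) (S Hb : R -> R) : Prop :=
  forall f0, `|f0| < fs / 2 -> forall k : int, Hb (f0 + k%:~R * fs) != 0 ->
    (forall j : int, Hb (f0 + j%:~R * fs) != 0 -> j = k) /\
    (forall j : int, S (f0 + j%:~R * fs) <= S (f0 + k%:~R * fs)).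

End Defs.

(* Main.v *)
Require Import Defs.
From HB Require Import structures.
From mathcomp Require Import all_boot all_order all_algebra.
From mathcomp Require Import all_classical all_reals all_analysis.
From mathcomp Require Import measurable_realfun zify ring lra.
Import Order.TTheory GRing.Theory Num.Theory.
Local Open Scope classical_set_scope.
Local Open Scope ring_scope.

Section Gen.
Variable R : realType.
Local Open Scope ereal_scope.
Lemma esum_int_split (a : int -> \bar R) : (forall k, 0 <= a k) ->
  \esum_(k in [set: int]) a k =
  \sum_(n <oo) a (Posz n) + \sum_(n <oo) a (Negz n).
Proof.
move=> a0; rewrite (esumID (range Posz)); last by [].
have -> : [set: int] `&` range Posz = Posz @` [set: nat].
  by rewrite setTI.
have -> : [set: int] `&` ~` range Posz = Negz @` [set: nat].
  apply/seteqP; split => k.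
    move=> [_ nP]; case: k nP => n nP; first by exfalso; apply: nP; exists n.
    by exists n.
  by move=> [n _ <-]; split => //; case.
congr (_ + _); rewrite -(esum_pred_image _ _ xpredT) //;
  try (by move=> x y _ _ []);
  by congr esum; apply/seteqP; split => k /= [n _ <-]; exists n.
Qed.

Lemma shift_meas (g : R -> R) (c : R) : measurable_fun setT g ->
  measurable_fun setT (fun x : R => g (x - c)%R).
Proof.
move=> mg; apply: measurableT_comp => //.
exact: measurable_funB.
Qed.

Lemma alias_sum_meas fs (g : R -> R) : measurable_fun setT g ->
  (forall x, (0 <= g x)%R) -> measurable_fun [set: R] (fun x : R => alias_sum fs g x).
Proof.
move=> mg g0.
have -> : alias_sum fs g = (fun f => \sum_(n <oo | n \in xpredT) (g (f - (Posz n)%:~R * fs)%R)%:E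
  + \sum_(n <oo | n \in xpredT) (g (f - (Negz n)%:~R * fs)%R)%:E).
  by apply/funext => f; rewrite /alias_sum esum_int_split // => k; rewrite lee_fin.
apply: emeasurable_funD; apply: ge0_emeasurable_sum => //.
- by move=> k x _ _; rewrite lee_fin.
- by move=> k _; apply/measurable_EFinP; apply: shift_meas.
- by move=> k x _ _; rewrite lee_fin.
- by move=> k _; apply/measurable_EFinP; apply: shift_meas.
Qed.

Lemma alias_sum_shift fs (g : R -> R) f : alias_sum fs g (f + fs)%R = alias_sum fs g f.
Proof.
rewrite /alias_sum (reindex_esum [set: int] [set: int] (fun k => k + 1)%R).
  apply: eq_esum => k _; congr (g _)%:E.
  rewrite intrD mulrDl mul1r; lra.
rewrite setTT_bijective; exists (fun k => k - 1)%R => k; lia.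
Qed.

Lemma esum_one (k0 : int) (x : \bar R) : 0 <= x ->
  \esum_(k in [set: int]) (if k == k0 then x else 0) = x.
Proof.
move=> x0; rewrite (esumID [set k0]); last by move=> k _; case: ifP.
rewrite setTI esum_set1 ?eqxx // esum1 ?adde0 // => k [_ /= /eqP kk0].
by rewrite ifN.
Qed.

Lemma esum_scale (a : int -> \bar R) (M : R) : (forall k, 0 <= a k) -> (0 <= M)%R ->
  \esum_(k in [set: int]) (a k * M%:E) = (\esum_(k in [set: int]) a k) * M%:E.
Proof.
move=> a0 M0.
transitivity ((\sum_(n<oo) a (Posz n) + \sum_(n<oo) a (Negz n)) * M%:E); last first.
  by congr (_ * _); symmetry; apply: esum_int_split.
rewrite esum_int_split; last by move=> k; rewrite mule_ge0.
rewrite ge0_muleDl; last 2 first.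
- by apply: nneseries_ge0 => n _ _; exact: a0.
- by apply: nneseries_ge0 => n _ _; exact: a0.
rewrite !(muleC _ M%:E) -!nneseriesZl //.
by congr (_ + _); apply: eq_eseriesr => n _; rewrite muleC.
Qed.

Lemma le_integral_nm d (T : measurableType d) (mu : {measure set T -> \bar R}) (D : set T)
  (f1 f2 : T -> \bar R) : (forall x, D x -> 0 <= f1 x) -> (forall x, D x -> f1 x <= f2 x) ->
  \int[mu]_(x in D) f1 x <= \int[mu]_(x in D) f2 x.
Proof.
move=> f10 f12.
have f20 x : D x -> 0 <= f2 x by move=> Dx; exact: le_trans (f10 _ Dx) (f12 _ Dx).
rewrite !ge0_integralE //.
apply: le_ereal_sup => _ /= [h hf <-]; exists h => // x; apply: le_trans (hf x) _.
rewrite /patch; case: ifP => // /set_mem; exact: f12.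
Qed.
End Gen.

Section Main.
Variables (R : realType) (fs : R) (S : R -> R) (N : nat).
Hypothesis fs0 : 0 < fs.
Hypothesis S0 : forall f, 0 <= S f.
Hypothesis mS : measurable_fun setT S.
Hypothesis SN : forall y, N%:R * fs <= `|y| -> S y = 0.

Let n := N.*2.+1.
Definition dd (i : 'I_n) : int := (i : nat)%:Z - N%:Z.
Definition vv (i : 'I_n) (f : R) := S (f + (dd i)%:~R * fs).
Definition CC (i : 'I_n) : set R := \bigcap_(j in [set: 'I_n])
  [set f | if (j < i)%N then vv j f < vv i f else vv j f <= vv i f].
Definition II : set R := [set x : R | -(fs/2) <= x < fs/2].

Lemma II_meas : measurable II.
Proof.
have -> : II = `[-(fs/2), fs/2[%classic.
  by apply/seteqP; split => x /=; rewrite in_itv.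
exact: measurable_itv.
Qed.

Lemma CC_meas i : measurable (CC i).
Proof.
apply: fin_bigcap_measurable; first exact: finite_finset.
move=> j _.
have mv k : measurable_fun setT (vv k).
  apply: measurableT_comp => //; exact: measurable_funD.
have mt : measurable [set true] by [].
have [h|h] := boolP (j < i)%N; rewrite ?h ?(negbTE h).
  have := measurable_fun_ltr (mv j) (mv i) measurableT mt.
  by rewrite setTI; congr measurable; apply/seteqP; split => x /=.
have := measurable_fun_ler (mv j) (mv i) measurableT mt.
by rewrite setTI; congr measurable; apply/seteqP; split => x /=.
Qed.

Lemma first_max (v : 'I_n -> R) : exists i : 'I_n,
  (forall j : 'I_n, (j < i)%N -> v j < v i) /\ (forall j, v j <= v i).
Proof.
have [i1 _ Hi1] := @arg_maxP _ _ _ (ord0 : 'I_n) xpredT v erefl.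
have ex : exists m, (m < n)%N && (v (inord m) == v i1).
  by exists i1; rewrite ltn_ord inord_val eqxx.
case: (ex_minnP ex) => m /andP[mn /eqP vm] minm.
exists (inord m); split.
- move=> j; rewrite inordK // vm => jm.
  have /= := Hi1 j isT; rewrite le_eqVlt => /orP[/eqP e|//].
  have := minm j; rewrite ltn_ord inord_val e eqxx => /(_ isT).
  by rewrite leqNgt jm.
- by move=> j; rewrite vm; exact: Hi1.
Qed.



Lemma CC_ex f : exists i, CC i f.
Proof.
have [i [H1 H2]] := first_max (fun i => vv i f).
by exists i => j _ /=; case: ifP => h; [exact: H1 | exact: H2].
Qed.

Lemma CC_uniq f i i' : CC i f -> CC i' f -> i = i'.
Proof.
move=> Hi Hi'; move: (Hi i' I) (Hi' i I) => /=.
case: (ltngtP i i') => h; last by move=> _ _; apply: val_inj.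
- by move=> /le_lt_trans H /H; rewrite ltxx.
- by move=> /lt_le_trans H /H; rewrite ltxx.
Qed.

Lemma range_int (j : int) : (-(N%:Z) <= j <= N%:Z)%R -> exists i : 'I_n, dd i = j.
Proof.
move=> /andP[h1 h2].
have hn : (absz (j + N%:Z)%R < n)%N by rewrite /n; lia.
by exists (Ordinal hn); rewrite /dd /=; lia.
Qed.

Lemma CC_max f i : CC i f -> `|f| <= fs/2 -> forall j : int, S (f + j%:~R * fs) <= vv i f.
Proof.
move=> Ci hf j.
have [hj|hj] := boolP (-(N%:Z) <= j <= N%:Z)%R.
  have [i' <-] := @range_int j hj.
  by have := Ci i' I; rewrite /= /vv; case: ifP => _ // /ltW.
rewrite SN; first exact: S0.
move/ler_normlP: hf => [hf1 hf2].
have [hj1|hj1] : (N%:Z + 1 <= j)%R \/ (j <= -(N%:Z) - 1)%R by lia.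
- have hr : (N%:R + 1 <= j%:~R :> R).
    by rewrite -(ler_int R) intrD -pmulrn mulr1z in hj1.
  rewrite ler_normr; apply/orP; left; nra.
- have hr : (j%:~R <= - N%:R - 1 :> R).
    by rewrite -(ler_int R) intrD intrN -pmulrn mulrN1z in hj1.
  rewrite ler_normr; apply/orP; right; nra.
Qed.

Lemma II_uniq x (m : int) : II x -> II (x + m%:~R * fs) -> m = 0.
Proof.
rewrite /II /= => /andP[a1 a2] /andP[b1 b2].
have h1 : m%:~R * fs < 1 * fs by lra.
have h2 : (-1) * fs < m%:~R * fs by lra.
rewrite ltr_pM2r // ltrz1 in h1.
rewrite ltr_pM2r // in h2.
have h3 : (- m)%:~R < (1:R) by rewrite intrN; lra.
rewrite ltrz1 in h3; lia.
Qed.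

Definition Hb2 (A : R -> R) (x : R) : R := \sum_(i < n)
  \1_II (x - (dd i)%:~R * fs) * \1_(CC i) (x - (dd i)%:~R * fs) * A (x - (dd i)%:~R * fs).

Lemma shift_eq f (k m : int) : f - k%:~R * fs - m%:~R * fs = f + (- (k + m))%:~R * fs.
Proof. by rewrite intrN intrD; ring. Qed.

Lemma II_off f (k m : int) : II f -> k != - m -> II (f - k%:~R * fs - m%:~R * fs) -> False.
Proof.
move=> If km; rewrite shift_eq => /(@II_uniq f _ If) h.
by move/eqP: km; apply; lia.
Qed.

Lemma Hb2_eval A f i k : II f -> CC i f ->
  Hb2 A (f - k%:~R * fs) = if k == - dd i then A f else 0.
Proof.
move=> If Ci; rewrite /Hb2 (bigD1 i) //= big1 ?addr0.
- case: eqP => [->|/eqP kn].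
    have -> : f - (- dd i)%:~R * fs - (dd i)%:~R * fs = f by rewrite intrN; ring.
    by rewrite !indicE !mem_set // !mul1r.
  rewrite indicE memNset ?mul0r ?mulr0 ?mul0r //.
  by move=> H; exact: (@II_off f _ _ If kn H).
- move=> j ji; rewrite !indicE.
  have [/eqP ->|kn] := boolP (k == - dd j).
    have -> : f - (- dd j)%:~R * fs - (dd j)%:~R * fs = f by rewrite intrN; ring.
    rewrite (@memNset _ (CC j) f) ?mulr0 ?mul0r //.
    by move=> Cj; move/eqP: ji; apply; exact: (@CC_uniq f _ _ Cj Ci).
  rewrite memNset ?mul0r //.
  by move=> H; exact: (@II_off f _ _ If kn H).
Qed.

Lemma alias_Hb2 A f i : II f -> CC i f -> 0 <= A f ->
  alias_sum fs (Hb2 A) f = (A f)%:E.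
Proof.
move=> If Ci A0; rewrite /alias_sum.
under eq_esum => k _ do rewrite (@Hb2_eval A f i k If Ci) (fun_if EFin).
by rewrite esum_one // lee_fin.
Qed.

Lemma alias_Hb2S A f i : II f -> CC i f -> 0 <= A f ->
  alias_sum fs (fun x => Hb2 A x * S x) f = (A f * vv i f)%:E.
Proof.
move=> If Ci A0; rewrite /alias_sum.
under eq_esum => k _ do rewrite (@Hb2_eval A f i k If Ci).
rewrite -(@esum_one _ (- dd i) (A f * vv i f)%:E); last by rewrite lee_fin; apply: mulr_ge0 => //; exact: S0.
apply: eq_esum => k _; case: eqP => [->|_]; last by rewrite mul0r.
by rewrite /vv intrN mulNr opprK.
Qed.


Lemma rep f : -(fs/2) <= f <= fs/2 ->
  exists f0, II f0 /\ forall g, alias_sum fs g f = alias_sum fs g f0.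
Proof.
move=> /andP[h1 h2]; have [hl|hge] := ltP f (fs/2).
  by exists f; split => //; rewrite /II /= h1 hl.
exists (-(fs/2)); split; first by rewrite /II /= lexx /=; have := fs0; lra.
move=> g; have -> : f = -(fs/2) + fs by lra.
exact: (@alias_sum_shift R fs g (-(fs/2))).
Qed.

Lemma main_res (kappa : R) (b : nat) (Hb : R -> R) : 0 < kappa ->
  feasible fs kappa Hb ->
  exists Hb' : R -> R,
    [/\ feasible fs kappa Hb', alias_free_argmax fs S Hb' &
        (objective fs b S Hb <= objective fs b S Hb')%E].
Proof.
move=> k0 [mHb [Hb0 Hfeas]].
pose A f := fine (alias_sum fs Hb f).
have A0 f : 0 <= A f by apply: fine_ge0; apply: esum_ge0 => k _; rewrite lee_fin.
have mAs : measurable_fun setT (alias_sum fs Hb) by exact: alias_sum_meas.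
have mA : measurable_fun setT A.
  by apply: measurableT_comp => //; exact: fine_measurable.
exists (Hb2 A); split.
- split; [|split].
  + rewrite /Hb2; apply: measurable_sum => i.
    apply: measurable_funM; first apply: measurable_funM.
    * by apply: shift_meas; apply: measurable_indic; exact: II_meas.
    * by apply: shift_meas; apply: measurable_indic; exact: CC_meas.
    * exact: shift_meas.
  + move=> x; rewrite /Hb2; apply: sumr_ge0 => i _; rewrite !indicE.
    by apply: mulr_ge0 => //; apply: mulr_ge0; exact: ler0n.
  + rewrite -Hfeas; congr (_ * _)%E.
    have mD : measurable (`[-(fs/2), fs/2]%classic : set R) by exact: measurable_itv.
    transitivity (\int[lebesgue_measure]_(f in `[(- (fs / 2))%R, (fs / 2)%R]) (A f)%:E)%E.
      apply: eq_integral => f; rewrite inE /= in_itv /= => hf.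
      have [f0 [If0 eqs]] := @rep f hf.
      have [i Ci] := CC_ex f0.
      by rewrite eqs (@alias_Hb2 A f0 i If0 Ci (A0 _)) /A eqs.
    have absA : (fun x => `|alias_sum fs Hb x|%E) = alias_sum fs Hb.
      by apply/funext => x; rewrite gee0_abs //; apply: esum_ge0 => k _; rewrite lee_fin.
    have Ifin : (\int[lebesgue_measure]_(f in `[(- (fs / 2))%R, (fs / 2)%R]) alias_sum fs Hb f < +oo)%E.
      rewrite ltey; apply/eqP => Iy; move: Hfeas; rewrite Iy gt0_muley ?lte_fin //.
      by rewrite mulr_gt0 // invr_gt0.
    have Aint : lebesgue_measure.-integrable `[(- (fs / 2))%R, (fs / 2)%R] (alias_sum fs Hb).
      apply/integrableP; split; first exact: (measurable_funS measurableT (@subsetT _ _) mAs).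
      by rewrite absA.
    apply: (@ae_eq_integral _ _ _ lebesgue_measure _ (alias_sum fs Hb)) => //.
    * apply/measurable_EFinP; exact: (measurable_funS measurableT (@subsetT _ _) mA).
    * exact: (measurable_funS measurableT (@subsetT _ _) mAs).
    * rewrite /ae_eq; apply: (filterS _ (@integrable_ae _ _ _ lebesgue_measure _ (measurable_itv _) _ Aint)) => x Hx Dx.
      by rewrite /A fineK //; exact: Hx.
- move=> f0 hf0 k.
  have If0 : II f0.
    by move/ltr_normlP: hf0 => [h1 h2]; rewrite /II /= h2 andbT; lra.
  have [i Ci] := CC_ex f0.
  have e j : Hb2 A (f0 + j%:~R * fs) = if j == dd i then A f0 else 0.
    have := @Hb2_eval A f0 i (- j) If0 Ci.
    by rewrite intrN mulNr opprK eqr_opp.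
  rewrite e; have [->|kd] := eqVneq k (dd i); last by rewrite eqxx.
  move=> _; split; first by move=> j; rewrite e; case: (eqVneq j (dd i)) => // _; rewrite eqxx.
  by move=> j; exact: (@CC_max f0 i Ci (ltW hf0) j).
- rewrite /objective.
  have c0 : (0 < 2 ^- (2 * b) :> R) by rewrite invr_gt0 exprn_gt0.
  apply: le_integral_nm.
    move=> x _; apply: mule_ge0.
      by apply: esum_ge0 => k _; rewrite lee_fin; apply: mulr_ge0.
    rewrite inve_ge0; apply: adde_ge0; last by rewrite lee_fin ltW.
    by apply: esum_ge0 => k _; rewrite lee_fin.
  move=> f; rewrite /= in_itv /= => hf.
  have [f0 [If0 eqs]] := @rep f hf.
  rewrite !eqs; have [i Ci] := CC_ex f0.
  rewrite (@alias_Hb2S A f0 i If0 Ci (A0 _)) (@alias_Hb2 A f0 i If0 Ci (A0 _)).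
  have hf0 : `|f0| <= fs / 2.
    by move: If0; rewrite /II /= => /andP[h1 h2]; rewrite ler_norml h1 ltW.
  have num : (alias_sum fs (fun x => (Hb x * S x)%R) f0 <= alias_sum fs Hb f0 * (vv i f0)%:E)%E.
    rewrite /alias_sum -esum_scale; last 2 first.
    - by move=> k; rewrite lee_fin.
    - exact: S0.
    apply: le_esum => k _; rewrite -EFinM lee_fin; apply: ler_wpM2l => //.
    by have := @CC_max f0 i Ci hf0 (- k); rewrite intrN mulNr.
  have Xge : (0 <= alias_sum fs Hb f0)%E by apply: esum_ge0 => k _; rewrite lee_fin.
  rewrite /A; case E : (alias_sum fs Hb f0) num Xge => [x| |] num Xge //.
  + rewrite /=; apply: lee_wpmul2r; last by rewrite EFinM.
    by rewrite inve_ge0 adde_ge0 // lee_fin ltW.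
  + rewrite addye // invey mule0; apply: mule_ge0.
      by rewrite lee_fin; apply: mulr_ge0 => //; exact: S0.
    by rewrite inve_ge0 adde_ge0 // lee_fin ?ltW.
Qed.

End Main.

Theorem lemma2 (R : realType) (fs fnyq kappa : R) (b : nat) (S : R -> R) :
  0 < fs -> 0 < kappa ->
  measurable_fun setT S -> (forall f, 0 <= S f) ->
  (forall f, S f != 0 -> - (fnyq / 2) < f < fnyq / 2) ->
  forall Hb : R -> R, feasible fs kappa Hb ->
  exists Hb' : R -> R,
    [/\ feasible fs kappa Hb', alias_free_argmax fs S Hb' &
        (objective fs b S Hb <= objective fs b S Hb')%E].
Proof.
move=> fs0 k0 mS S0 Ssupp Hb feas.
have [N hN] : exists N : nat, `|fnyq| / fs < N%:R.
  by exists (Num.bound (`|fnyq| / fs)); apply: archi_boundP; rewrite divr_ge0 // ltW.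
rewrite ltr_pdivrMr // in hN.
have SN : forall y, N%:R * fs <= `|y| -> S y = 0.
  move=> y hy; apply/eqP; apply: contraT => /Ssupp /andP[h1 h2].
  have h3 : `|y| < fnyq / 2 by rewrite ltr_norml h1.
  have h4 := ler_norm fnyq.
  have h5 := normr_ge0 y.
  suff : False by [].
  lra.
by apply: main_res => //; exact: SN.
Qed.
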